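(* Let $p$ be a prime, let $m\ge 0$ be an integer, and let $f:\mathbb{Z}_p\to\mathbb{Z}_p$ be an analytic function of level $m$. Then $f$ is an arithmetic differential operator of order $m$.
   Context: $\mathbb{Z}_p$ denotes the ring of $p$-adic integers with the $p$-adic norm $|\cdot|_p$, $|p|_p=p^{-1}$. The Fermat quotient operator is $\delta:\mathbb{Z}_p\to\mathbb{Z}_p$, $\delta a=(a-a^p)/p$, and $\delta^i$ denotes its $i$-th iterate. A power series $F=\sum_{\alpha} a_\alpha x^\alpha\in\mathbb{Z}_p[[x_0,\dots,x_k]]$ is called restricted if $a_\alpha\to 0$ $p$-adically as $|\alpha|=\alpha_0+\dots+\alpha_k\to\infty$. A function $f:\mathbb{Z}_p\to\mathbb{Z}_p$ is an arithmetic differential operator of order $m$ if there is a restricted power series $F\in\mathbb{Z}_p[[x_0,\dots,x_m]]$ with $f(a)=F(a,\delta a,\dots,\delta^m a)$ for all $a\in\mathbb{Z}_p$. A function $f:\mathbb{Z}_p\to\mathbb{Z}_p$ is analytic of level $m$ if for every $a\in\mathbb{Z}_p$ there is a restricted power series $F_a\in\mathbb{Z}_p[[x]]$ (one variable) such that $f(a+p^m u)=F_a(u)$ for all $u\in\mathbb{Z}_p$. *)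

(* Defs.v *)
(* The ring Z_p of p-adic integers is built concretely as the
   inverse limit of Z/p^n Z: an element is a coherent family of residues
   x_n in [0, p^n) with x_{n+1} = x_n (mod p^n). *)
From mathcomp Require Import all_boot.
From mathcomp Require Import zify.

Set Implicit Arguments.
Unset Strict Implicit.
Unset Printing Implicit Defensive.

Section Padic.
Variable p : nat.

Record Zp := MkZp {
  zval : nat -> nat;
  zbound : forall n, zval n < p ^ n;
  zcompat : forall n, zval n.+1 %% p ^ n = zval n }.

Lemma zp_pos (x : Zp) : 0 < p.
Proof. by have := zbound x 1; rewrite expn1; case: p. Qed.

Definition mk (hp : 0 < p) (g : nat -> nat)
  (hg : forall n, g n.+1 = g n %[mod p ^ n]) : Zp.
Proof.
refine (@MkZp (fun n => g n %% p ^ n) _ _).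
- by move=> n; rewrite ltn_pmod // expn_gt0 hp.
- move=> n; rewrite modn_dvdm; first exact: hg.
  by rewrite (dvdn_exp2l p (leqnSn n)).
Defined.

Definition zadd (x y : Zp) : Zp.
Proof.
refine (@mk (zp_pos x) (fun n => zval x n + zval y n) _).
by move=> n; rewrite -modnDm !zcompat.
Defined.

Definition zmul (x y : Zp) : Zp.
Proof.
refine (@mk (zp_pos x) (fun n => zval x n * zval y n) _).
by move=> n; rewrite -modnMm !zcompat.
Defined.

Lemma predexpS (hp : 0 < p) n : (p ^ n.+1).-1 = (p.-1 * p ^ n) + (p ^ n).-1.
Proof.
have hn : 0 < p ^ n by rewrite expn_gt0 hp.
rewrite expnS; case: p hp hn => // q _ hn /=.
rewrite mulSn; lia.
Qed.

(** additive inverse: multiplication by -1 = (p^n - 1)_n *)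
Definition zopp (x : Zp) : Zp.
Proof.
refine (@mk (zp_pos x) (fun n => zval x n * (p ^ n).-1) _).
move=> n; rewrite -modnMm zcompat predexpS ?(zp_pos x) //.
by rewrite modnMDl modnMmr.
Defined.

Definition zsub (x y : Zp) : Zp := zadd x (zopp y).

Definition zone (x : Zp) : Zp := @mk (zp_pos x) (fun _ => 1) (fun _ => erefl).

(** the natural number c viewed in Z_p (x only witnesses p > 0) *)
Definition zofnat (x : Zp) (c : nat) : Zp :=
  @mk (zp_pos x) (fun _ => c) (fun _ => erefl).

Definition zpow (x : Zp) (k : nat) : Zp := iter k (zmul x) (zone x).

Lemma div_mod_shift (hp : 0 < p) a n :
  (a %% p ^ n.+1) %/ p = a %/ p %[mod p ^ n].
Proof.
rewrite {2}(divn_eq a (p ^ n.+1)) expnSr mulnA divnMDl //.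
by rewrite modnMDl.
Qed.

(** floor division by p: (x / p)_n = x_{n+1} div p; exact when p | x *)
Definition zshift (x : Zp) : Zp.
Proof.
refine (@mk (zp_pos x) (fun n => zval x n.+1 %/ p) _).
move=> n; rewrite -(zcompat x n.+1).
by rewrite div_mod_shift // (zp_pos x).
Defined.

Definition delta (a : Zp) : Zp := zshift (zsub a (zpow a p)).

Definition restricted1 (c : nat -> Zp) : Prop :=
  forall n, exists N, forall j, N <= j -> zval (c j) n = 0.

Definition eval1 (c : nat -> Zp) (u y : Zp) : Prop :=
  forall n, exists N, forall M, N <= M ->
    zval y n = (\sum_(j < M) zval (c j) n * zval u n ^ j) %% p ^ n.

Definition mdeg (k : nat) (alpha : {ffun 'I_k.+1 -> nat}) : nat :=
  \sum_(i < k.+1) alpha i.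

Definition restricted (k : nat) (F : {ffun 'I_k.+1 -> nat} -> Zp) : Prop :=
  forall n, exists N, forall alpha, N <= mdeg alpha -> zval (F alpha) n = 0.

Definition eval (k : nat) (F : {ffun 'I_k.+1 -> nat} -> Zp)
    (xs : 'I_k.+1 -> Zp) (y : Zp) : Prop :=
  forall n, exists N, forall M, N <= M ->
    zval y n =
      (\sum_(alpha : {ffun 'I_k.+1 -> 'I_M.+1} | \sum_(i < k.+1) (alpha i : nat) <= M)
          zval (F [ffun i => nat_of_ord (alpha i)]) n *
          \prod_(i < k.+1) zval (xs i) n ^ (alpha i)) %% p ^ n.

Definition arith_diff_op (m : nat) (f : Zp -> Zp) : Prop :=
  exists F : {ffun 'I_m.+1 -> nat} -> Zp,
    restricted F /\
    forall a : Zp, eval F (fun i : 'I_m.+1 => iter i delta a) (f a).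

Definition analytic_level (m : nat) (f : Zp -> Zp) : Prop :=
  forall a : Zp, exists c : nat -> Zp,
    restricted1 c /\
    forall u : Zp, eval1 c u (f (zadd a (zmul (zofnat a (p ^ m)) u))).

End Padic.

(* Main.v *)
From HB Require Import structures.
From mathcomp Require Import all_boot all_algebra.
From Stdlib Require Import ProofIrrelevance FunctionalExtensionality.
From mathcomp Require Import boolp ring zify.
From mathcomp Require cyclic.
From mathcomp Require Import mpoly.
Require Import Defs.
Set Warnings "-notation-overridden,-ambiguous-paths".
Set Implicit Arguments. Unset Strict Implicit. Unset Printing Implicit Defensive.
Import GRing.Theory.

Section Main.


Variable p : nat.
Hypothesis hp : prime p.
Notation ZP := (Defs.Zp p).
Lemma pgt0 : 0 < p. Proof. exact: prime_gt0 hp. Qed.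
Lemma pn_gt0 n : 0 < p ^ n. Proof. by rewrite expn_gt0 pgt0. Qed.
Lemma zext (x y : ZP) : (forall n, zval x n = zval y n) -> x = y.
Proof.
case: x y => [fx bx cx] [fy by_ cy] /= h.
have e : fx = fy by apply: functional_extensionality.
subst fy. f_equal; apply: proof_irrelevance.
Qed.
Lemma zmod (x : ZP) n : zval x n %% p ^ n = zval x n.
Proof. by rewrite modn_small // zbound. Qed.
Definition z0 : ZP := @mk p pgt0 (fun _ => 0) (fun _ => erefl).
Definition z1 : ZP := @mk p pgt0 (fun _ => 1) (fun _ => erefl).
Lemma zv0 n : zval z0 n = 0. Proof. by rewrite /= mod0n. Qed.
Lemma zv1 n : zval z1 n = 1 %% p ^ n. Proof. by []. Qed.
Lemma zvD' (x y : ZP) n : zval (zadd x y) n = (zval x n + zval y n) %% p ^ n. Proof. by []. Qed.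
Lemma zvM' (x y : ZP) n : zval (zmul x y) n = (zval x n * zval y n) %% p ^ n. Proof. by []. Qed.
Lemma zvN' (x : ZP) n : zval (zopp x) n = (zval x n * (p ^ n).-1) %% p ^ n. Proof. by []. Qed.

Lemma zaddA : associative (@zadd p).
Proof. by move=> x y z; apply: zext => n; rewrite !zvD' modnDml modnDmr addnA. Qed.
Lemma zaddC : commutative (@zadd p).
Proof. by move=> x y; apply: zext => n; rewrite !zvD' addnC. Qed.
Lemma zadd0 : left_id z0 (@zadd p).
Proof. by move=> x; apply: zext => n; rewrite zvD' zv0 add0n zmod. Qed.
Lemma zaddN : left_inverse z0 (@zopp p) (@zadd p).
Proof.
move=> x; apply: zext => n; rewrite zvD' zvN' zv0 modnDml.
rewrite -{2}(muln1 (zval x n)) -mulnDr addn1 prednK ?pn_gt0 //.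
by rewrite modnMl.
Qed.
HB.instance Definition _ := gen_eqMixin ZP.
HB.instance Definition _ := gen_choiceMixin ZP.
HB.instance Definition _ := GRing.isZmodule.Build ZP zaddA zaddC zadd0 zaddN.
Lemma zmulA : associative (@zmul p).
Proof. by move=> x y z; apply: zext => n; rewrite !zvM' modnMml modnMmr mulnA. Qed.
Lemma zmulC : commutative (@zmul p).
Proof. by move=> x y; apply: zext => n; rewrite !zvM' mulnC. Qed.
Lemma zmul1 : left_id z1 (@zmul p).
Proof. by move=> x; apply: zext => n; rewrite zvM' zv1 modnMml mul1n zmod. Qed.
Lemma zmulD : left_distributive (@zmul p) (@zadd p).
Proof. by move=> x y z; apply: zext => n; rewrite !zvM' !zvD' modnMml modnDm mulnDl. Qed.
Lemma z10 : z1 != z0.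
Proof.
apply/eqP => /(congr1 (fun x => zval x 1)); rewrite zv1 zv0 expn1 modn_small //.
exact: prime_gt1 hp.
Qed.
HB.instance Definition _ := GRing.Zmodule_isComNzRing.Build ZP zmulA zmulC zmul1 zmulD z10.

Local Open Scope ring_scope.

Lemma zvD (x y : ZP) n : zval (x + y) n = ((zval x n + zval y n) %% p ^ n)%N. Proof. by []. Qed.
Lemma zvM (x y : ZP) n : zval (x * y) n = ((zval x n * zval y n) %% p ^ n)%N. Proof. by []. Qed.
Lemma zvZ n : zval (0 : ZP) n = 0%N. Proof. exact: zv0. Qed.
Lemma zvO n : zval (1 : ZP) n = (1 %% p ^ n)%N. Proof. by []. Qed.

Lemma zvnat (c : nat) n : zval (c%:R : ZP) n = (c %% p ^ n)%N.
Proof.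
elim: c => [|c IH]; first by rewrite zvZ mod0n.
by rewrite -addn1 natrD zvD IH zvO modnDm.
Qed.

Lemma zvsum (I : Type) (r : seq I) (P : pred I) (F : I -> ZP) n :
  zval (\sum_(i <- r | P i) F i) n = ((\sum_(i <- r | P i) zval (F i) n) %% p ^ n)%N.
Proof.
elim/big_rec2: _ => [|i y1 y2 _ IH]; first by rewrite zvZ mod0n.
by rewrite zvD IH modnDmr.
Qed.

Lemma zvprod (I : Type) (r : seq I) (P : pred I) (F : I -> ZP) n :
  zval (\prod_(i <- r | P i) F i) n = ((\prod_(i <- r | P i) zval (F i) n) %% p ^ n)%N.
Proof.
elim/big_rec2: _ => [|i y1 y2 _ IH]; first by rewrite zvO.
by rewrite zvM IH modnMmr.
Qed.

Lemma zvX (x : ZP) k n : zval (x ^+ k) n = ((zval x n) ^ k %% p ^ n)%N.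
Proof.
elim: k => [|k IH]; first by rewrite expr0 zvO.
by rewrite exprS zvM IH modnMmr expnS.
Qed.

Lemma zval_le (x : ZP) k j : (k <= j)%N -> (zval x j %% p ^ k)%N = zval x k.
Proof.
move=> /subnK <-; elim: (j - k)%N => [|d IH]; first by rewrite add0n zmod.
rewrite addSn -(@modn_dvdm (p ^ (d + k))) ?zcompat ?IH //.
by rewrite dvdn_exp2l // leq_addl.
Qed.

Definition pcg (R : pzRingType) k (x y : R) := exists z, x - y = (p ^ k)%:R * z.

Section Pcg.
Variable R : comNzRingType.
Implicit Types x y z : R.
Lemma pcg_refl k x : pcg k x x.
Proof. by exists 0; rewrite subrr mulr0. Qed.
Lemma pcg_sym k x y : pcg k x y -> pcg k y x.
Proof. by case=> z e; exists (- z); rewrite mulrN -e opprB. Qed.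
Lemma pcg_trans k x y z : pcg k x y -> pcg k y z -> pcg k x z.
Proof.
case=> a ea [b eb]; exists (a + b).
by rewrite mulrDr -ea -eb addrA subrK.
Qed.
Lemma pcgD k x y x' y' : pcg k x y -> pcg k x' y' -> pcg k (x + x') (y + y').
Proof.
case=> a ea [b eb]; exists (a + b).
by rewrite mulrDr -ea -eb opprD addrACA.
Qed.
Lemma pcgN k x y : pcg k x y -> pcg k (- x) (- y).
Proof. by case=> a ea; exists (- a); rewrite mulrN -ea; ring. Qed.
Lemma pcgB k x y x' y' : pcg k x y -> pcg k x' y' -> pcg k (x - x') (y - y').
Proof. by move=> h1 h2; apply: pcgD => //; apply: pcgN. Qed.
Lemma pcgM k x y x' y' : pcg k x y -> pcg k x' y' -> pcg k (x * x') (y * y').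
Proof.
case=> a ea [b eb]; exists (a * x' + y * b).
have -> : x * x' - y * y' = (x - y) * x' + y * (x' - y') by ring.
by rewrite ea eb; ring.
Qed.
Lemma pcgX k x y n : pcg k x y -> pcg k (x ^+ n) (y ^+ n).
Proof.
move=> h; elim: n => [|n IH]; first by rewrite !expr0; apply: pcg_refl.
by rewrite !exprS; apply: pcgM.
Qed.
Lemma pcg_sum k (I : Type) (r : seq I) (P : pred I) (F G : I -> R) :
  (forall i, P i -> pcg k (F i) (G i)) ->
  pcg k (\sum_(i <- r | P i) F i) (\sum_(i <- r | P i) G i).
Proof.
move=> h; elim/big_rec2: _ => [|i y1 y2 Pi IH]; first exact: pcg_refl.
by apply: pcgD => //; apply: h.
Qed.
Lemma pcg_prod k (I : Type) (r : seq I) (P : pred I) (F G : I -> R) :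
  (forall i, P i -> pcg k (F i) (G i)) ->
  pcg k (\prod_(i <- r | P i) F i) (\prod_(i <- r | P i) G i).
Proof.
move=> h; elim/big_rec2: _ => [|i y1 y2 Pi IH]; first exact: pcg_refl.
by apply: pcgM => //; apply: h.
Qed.
Lemma pcg0 x y : pcg 0 x y.
Proof. by exists (x - y); rewrite expn0 mul1r. Qed.
Lemma pcg_le j k x y : (j <= k)%N -> pcg k x y -> pcg j x y.
Proof.
move=> /subnK <- [a ea]; exists ((p ^ (k - j))%:R * a).
by rewrite ea expnD natrM mulrA [X in X * _]mulrC.
Qed.
Lemma pcg_mulp k x y : pcg k x y -> pcg k.+1 (p%:R * x) (p%:R * y).
Proof.
case=> a ea; exists a; rewrite -mulrBr ea expnS natrM mulrA //.
Qed.
Lemma pcg_mulpn j k x y : pcg k x y -> pcg (j + k) ((p ^ j)%:R * x) ((p ^ j)%:R * y).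
Proof.
case=> a ea; exists a; rewrite -mulrBr ea expnD natrM mulrA //.
Qed.
Lemma pcg_pn k z : pcg k ((p ^ k)%:R * z) 0.
Proof. by exists z; rewrite subr0. Qed.
Lemma pcg_eq k x y : x = y -> pcg k x y.
Proof. by move=> ->; apply: pcg_refl. Qed.
End Pcg.

Lemma pcg_rmorph (R S : comNzRingType) (f : {rmorphism R -> S}) k x y :
  pcg k x y -> pcg k (f x) (f y).
Proof. by case=> a ea; exists (f a); rewrite -rmorphB ea rmorphM rmorph_nat. Qed.


Lemma zv_pn k (z : ZP) : zval ((p ^ k)%:R * z) k = 0%N.
Proof. by rewrite zvM zvnat modnn mul0n mod0n. Qed.

Lemma zvN (x : ZP) n : zval (- x) n = ((zval x n * (p ^ n).-1) %% p ^ n)%N. Proof. by []. Qed.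

Lemma zv_sub0 (x y : ZP) k : zval x k = zval y k -> zval (x - y) k = 0%N.
Proof.
move=> e; rewrite zvD zvN e modnDmr.
rewrite -{1}(muln1 (zval y k)) -mulnDr add1n prednK ?pn_gt0 //.
by rewrite modnMl.
Qed.

Lemma zvshift (x : ZP) n : zval (zshift x) n = ((zval x n.+1 %/ p) %% p ^ n)%N.
Proof. by []. Qed.

Lemma pshift (x : ZP) : zval x 1 = 0%N -> p%:R * zshift x = x.
Proof.
move=> h; apply: zext => n; rewrite zvM zvshift zvnat modnMml modnMmr.
have dx : (p %| zval x n.+1)%N.
  by rewrite /dvdn; have := zval_le x (ltn0Sn n); rewrite expn1 h => ->.
by rewrite mulnC divnK // zcompat.
Qed.

Lemma zdiv k (w : ZP) : zval w k = 0%N -> exists z, w = (p ^ k)%:R * z.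
Proof.
elim: k w => [|k IH] w h; first by exists w; rewrite expn0 mul1r.
have h1 : zval w 1 = 0%N by rewrite -(zval_le w (ltn0Sn k)) h mod0n.
have h2 : zval (zshift w) k = 0%N.
  by rewrite zvshift h div0n mod0n.
have [z ez] := IH _ h2; exists z.
by rewrite -(pshift h1) ez expnS natrM mulrA.
Qed.

Lemma pcg_zval k (x y : ZP) : pcg k x y <-> zval x k = zval y k.
Proof.
split.
  case=> z e; have -> : x = (x - y) + y by rewrite subrK.
  by rewrite e zvD zv_pn add0n zmod.
move=> e; have [z ez] := zdiv (zv_sub0 e); by exists z.
Qed.

Lemma ztors1 (x y : ZP) : p%:R * x = p%:R * y -> x = y.
Proof.
move=> e; apply: zext => n.
have : zval (p%:R * x) n.+1 = zval (p%:R * y) n.+1 by rewrite e.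
rewrite !zvM !zvnat !modnMml.
rewrite expnS -!muln_modr ?pgt0 // => /eqP; rewrite eqn_pmul2l ?pgt0 //.
by rewrite !zcompat => /eqP.
Qed.

Lemma ztors j (x y : ZP) : (p ^ j)%:R * x = (p ^ j)%:R * y -> x = y.
Proof.
elim: j => [|j IH]; first by rewrite expn0 !mul1r.
by rewrite expnS natrM -!mulrA => /ztors1 /IH.
Qed.

Lemma pcg_cancel j k (x y : ZP) :
  pcg (j + k) ((p ^ j)%:R * x) ((p ^ j)%:R * y) -> pcg k x y.
Proof.
case=> z ez; exists z; apply: (@ztors j).
by rewrite mulrBr ez expnD natrM mulrA.
Qed.

Lemma zoneE (a : ZP) : zone a = 1.
Proof. by apply: zext. Qed.

Lemma zpowE (a : ZP) k : zpow a k = a ^+ k.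
Proof.
rewrite /zpow; elim: k => [|k IH]; first by rewrite zoneE.
by rewrite iterS IH exprS.
Qed.

Lemma zofnatE (a : ZP) c : zofnat a c = c%:R.
Proof. by apply: zext => n; rewrite zvnat. Qed.

Lemma deltaS (a : ZP) : delta a = zshift (a - a ^+ p).
Proof. by rewrite /delta /zsub -zpowE. Qed.

Lemma deltaE (a : ZP) : a = a ^+ p + p%:R * delta a.
Proof.
have h : zval (a - a ^+ p) 1 = 0%N.
  apply: zv_sub0; rewrite zvX expn1 -{1}(zmod a 1) expn1.
  by apply/eqP; rewrite eq_sym; apply/eqP; apply: fermat_little hp.
by rewrite deltaS pshift // addrC subrK.
Qed.



Lemma exprDp_aux (R : comNzRingType) n (x y : R) : prime n.+1 ->
  (x + y) ^+ n.+1 = x ^+ n.+1 + y ^+ n.+1 +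
   n.+1%:R * \sum_(i < n) (x ^+ (n.+1 - i.+1) * y ^+ i.+1) *+ ('C(n.+1, i.+1) %/ n.+1).
Proof.
move=> hpn.
rewrite exprDn big_ord_recl subn0 expr0 mulr1 bin0 mulr1n.
rewrite big_ord_recr /= subnn expr0 mul1r binn mulr1n.
rewrite -addrA; congr (_ + _); rewrite addrC /bump /= add1n; congr (_ + _).
rewrite mulr_sumr; apply: eq_bigr => i _; rewrite /bump /= add1n.
have hi : (0 < i.+1 < n.+1)%N by rewrite /= ltnS ltn_ord.
by rewrite -{1}(divnK (prime_dvd_bin hpn hi)) mulrnA mulr_natl.
Qed.

Definition Sb (R : comNzRingType) (x y : R) :=
  \sum_(i < p.-1) (x ^+ (p - i.+1) * y ^+ i.+1) *+ ('C(p, i.+1) %/ p).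

Lemma exprDp (R : comNzRingType) (x y : R) : (x + y) ^+ p = x ^+ p + y ^+ p + p%:R * Sb x y.
Proof.
have e := prednK (prime_gt0 hp).
have hp' : prime p.-1.+1 by rewrite e; exact: hp.
have h := exprDp_aux x y hp'; rewrite e in h; exact: h.
Qed.

Lemma deltaE' (a : ZP) : p%:R * delta a = a - a ^+ p.
Proof. by rewrite {2}(deltaE a) addrC addKr. Qed.

Lemma delta_add (x y : ZP) : delta (x + y) = delta x + delta y - Sb x y.
Proof.
apply: ztors1; rewrite deltaE' exprDp !mulrDr mulrN !deltaE'; ring.
Qed.

Definition kap g (j : nat) := (('C(p, j.+1) * p ^ (g * j)) %/ p)%N.
Definition V' (R : comNzRingType) (c : R) g (u : R) :=
  \sum_(j < p) (c ^+ (p - j.+1) *+ kap g j) * u ^+ j.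
Definition V (R : comNzRingType) (c : R) g (u : R) := u * V' c g u.

Lemma kapE g j : (0 < g)%N -> (j < p)%N -> ('C(p, j.+1) * p ^ (g * j) = p * kap g j)%N.
Proof.
move=> g0 jp; rewrite /kap [RHS]mulnC divnK //.
case: j jp => [|j] jp; first by rewrite bin1 muln0 expn0 muln1.
by apply: dvdn_mull; rewrite -{1}(expn1 p) dvdn_exp2l // muln_gt0 g0.
Qed.

Lemma ball_delta (c u : ZP) h :
  delta (c + (p ^ h.+1)%:R * u) = delta c + (p ^ h)%:R * (u - p%:R * V c h.+1 u).
Proof.
apply: ztors1; rewrite deltaE' mulrDr deltaE'.
rewrite exprDn big_ord_recl subn0 expr0 mulr1 bin0 mulr1n.
have -> : \sum_(i < p) c ^+ (p - bump 0 i) * ((p ^ h.+1)%:R * u) ^+ bump 0 i *+ 'C(p, bump 0 i)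
   = (p ^ h.+1)%:R * p%:R * V c h.+1 u.
  rewrite /V /V' !mulr_sumr; apply: eq_bigr => j _; rewrite /bump /= add1n.
  have key := kapE (ltn0Sn h) (ltn_ord j).
  have key' : ('C(p, j.+1))%:R * ((p ^ h.+1)%:R) ^+ j = p%:R * (kap h.+1 j)%:R :> ZP.
    by rewrite -natrX -!natrM -expnM key.
  rewrite -[_ *+ 'C(p, j.+1)]mulr_natr -[c ^+ _ *+ kap _ _]mulr_natr exprS exprMn.
  transitivity (c ^+ (p - j.+1) * (p ^ h.+1)%:R * u * u ^+ j * (('C(p, j.+1))%:R * ((p ^ h.+1)%:R) ^+ j)).
    ring.
  rewrite key'; ring.
rewrite expnS natrM; ring.
Qed.

Lemma pcg_sub0 (R : comNzRingType) k (x y : R) : pcg k x y <-> pcg k (x - y) 0.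
Proof. by rewrite /pcg subr0. Qed.

Lemma V_pcg (R : comNzRingType) k (c : R) g u u' : pcg k u u' -> pcg k (V c g u) (V c g u').
Proof.
move=> h; apply: pcgM => //; apply: pcg_sum => j _; apply: pcgM; first exact: pcg_refl.
exact: pcgX.
Qed.

Lemma V_rmorph (R S : comNzRingType) (f : {rmorphism R -> S}) (c : R) g u :
  f (V c g u) = V (f c) g (f u).
Proof.
rewrite /V /V' rmorphM rmorph_sum; congr (_ * _); apply: eq_bigr => j _.
by rewrite rmorphM rmorphMn !rmorphXn.
Qed.

Lemma Sb_rmorph (R S : comNzRingType) (f : {rmorphism R -> S}) (x y : R) :
  f (Sb x y) = Sb (f x) (f y).
Proof.
rewrite /Sb rmorph_sum; apply: eq_bigr => j _.
by rewrite rmorphMn rmorphM !rmorphXn.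
Qed.

Lemma ball_iff g (x c : ZP) :
  pcg g x c <-> (forall i, (i < g)%N -> pcg 1 (iter i (@delta p) x) (iter i (@delta p) c)).
Proof.
elim: g x c => [|g IH] x c.
  by split=> // _; apply: pcg0.
split.
  case=> u eu.
  have ex : x = c + (p ^ g.+1)%:R * u by rewrite -eu addrC subrK.
  have hd : pcg g (delta x) (delta c).
    by rewrite ex ball_delta; exists (u - p%:R * V c g.+1 u); rewrite addrC addKr.
  move=> [|i] hi.
    by apply: (@pcg_le _ 1 g.+1) => //; exists u.
  rewrite !iterSr; apply: (proj1 (IH (delta x) (delta c)) hd).
  by [].
move=> h.
have [u eu] := h 0%N (ltn0Sn g); rewrite /= in eu.
have ex : x = c + (p ^ 0.+1)%:R * u by rewrite -eu addrC subrK.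
have hd : pcg g (delta x) (delta c).
  apply/IH => i hi; rewrite -!iterSr; exact: h i.+1 hi.
move: hd; rewrite ex ball_delta expn0 mul1r => hd.
have hd' : pcg g (u - p%:R * V c 1 u) 0.
  by case: hd => z ez; exists z; rewrite subr0 -ez; ring.
have hu : forall s, (s <= g)%N -> pcg s u 0.
  elim=> [|s IHs] hs; first exact: pcg0.
  have h1 : pcg s (V c 1 u) 0.
    have := V_pcg c 1 (IHs (ltnW hs)).
    by rewrite /V mul0r.
  have h2 : pcg s.+1 (p%:R * V c 1 u) 0.
    by have := pcg_mulp h1; rewrite mulr0.
  have h3 : pcg s.+1 (u - p%:R * V c 1 u) 0 by apply: pcg_le hd'.
  have := pcgD h3 h2; rewrite subrK addr0 //.
have [w ew] := hu g (leqnn g).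
exists w; move: ew; rewrite subr0 => ->; rewrite [(p ^ g.+1)%N]expnS natrM expnS expn0 muln1; ring.
Qed.

Lemma fermat_unit (w : ZP) : ~ pcg 1 w 0 -> pcg 1 (w ^+ p.-1) 1.
Proof.
move=> nw; apply/pcg_zval; rewrite zvX zvO expn1.
have w0 : zval w 1 != 0%N.
  by apply/eqP => e; apply: nw; apply/pcg_zval; rewrite e zvZ.
have wlt : (zval w 1 < p)%N by have := zbound w 1; rewrite expn1.
have cop : coprime (zval w 1) p.
  rewrite coprime_sym prime_coprime ?hp //; apply/negP => /dvdn_leq.
  by rewrite lt0n w0 => /(_ isT); rewrite leqNgt wlt.
by rewrite -(totient_prime hp) cyclic.Euler_exp_totient.
Qed.

Lemma fermat_zero (w : ZP) : pcg 1 w 0 -> pcg 1 (w ^+ p.-1) 0.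
Proof.
move=> h; have := pcgX p.-1 h; rewrite expr0n.
have -> : (p.-1 == 0%N) = false.
  by apply/negbTE; rewrite -lt0n -ltnS prednK ?prime_gt0 ?prime_gt1 // hp.
by [].
Qed.

Lemma idem1 N (t : ZP) : pcg N (t * t) t -> pcg 1 t 1 -> pcg N t 1.
Proof.
move=> [h eh] t1; suff : forall s, (s <= N)%N -> pcg s t 1 by apply.
elim=> [|s IH] hs; first exact: pcg0.
have [w ew] := IH (ltnW hs).
have e1 : (p ^ s)%:R * (t * w) = (p ^ s)%:R * ((p ^ (N - s))%:R * h).
  rewrite [RHS]mulrA -natrM -expnD subnKC ?(ltnW hs) // -eh mulrCA -ew; ring.
have e2 := ztors e1.
have tw : pcg 1 (t * w) 0.
  apply: (@pcg_le _ 1 (N - s)); first by rewrite subn_gt0.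
  by exists h; rewrite subr0.
have : pcg 1 (t * w) (1 * w) by apply: pcgM => //; apply: pcg_refl.
rewrite mul1r => tw'.
have [w' ew'] : pcg 1 w 0 by apply: pcg_trans (pcg_sym tw') tw.
exists w'; rewrite ew; move: ew'; rewrite subr0 => ->.
by rewrite expnSr expn0 mul1n [in RHS]expnSr natrM mulrA.
Qed.

Lemma idem0 N (t : ZP) : pcg N (t * t) t -> pcg 1 t 0 -> pcg N t 0.
Proof.
move=> [h eh] t1; suff : forall s, (s <= N)%N -> pcg s t 0 by apply.
elim=> [|s IH] hs; first exact: pcg0.
have [w ew] := IH (ltnW hs); rewrite subr0 in ew.
have e1 : (p ^ s)%:R * (w * (t - 1)) = (p ^ s)%:R * ((p ^ (N - s))%:R * h).
  rewrite [RHS]mulrA -natrM -expnD subnKC ?(ltnW hs) // -eh mulrA -ew; ring.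
have e2 := ztors e1.
have tw : pcg 1 (w * (t - 1)) 0.
  apply: (@pcg_le _ 1 (N - s)); first by rewrite subn_gt0.
  by exists h; rewrite subr0.
have : pcg 1 (w * (t - 1)) (w * (0 - 1)) by apply: pcgM; [apply: pcg_refl | apply: pcgB => //; apply: pcg_refl].
rewrite sub0r mulrN1 => tw'.
have [w' ew'] : pcg 1 w 0.
  have := pcgN (pcg_trans (pcg_sym tw') tw); rewrite opprK oppr0 //.
exists w'; rewrite subr0 ew; move: ew'; rewrite subr0 => ->.
by rewrite expnSr expn0 mul1n [in RHS]expnSr natrM mulrA.
Qed.

Section Newton.
Variable R : comNzRingType.
Definition sN k : R := (p ^ (2 ^ k))%:R.
Fixpoint newt (E0 H0 : R) k : R * R :=
  if k is k'.+1 then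
    let: (E, H) := newt E0 H0 k' in
    (E - (2%:R * E - 1) * sN k' * H, H * H * (4%:R * sN k' * H - 3%:R))
  else (E0, H0).

Lemma sN0 : sN 0 = p%:R.
Proof. by rewrite /sN expn0 expnS expn0 muln1. Qed.
Lemma sNS k : sN k.+1 = sN k * sN k.
Proof. by rewrite /sN expnS mul2n -addnn expnD natrM. Qed.

Lemma newt_rel E0 H0 : E0 * E0 - E0 = p%:R * H0 ->
  forall k, (newt E0 H0 k).1 * (newt E0 H0 k).1 - (newt E0 H0 k).1 = sN k * (newt E0 H0 k).2.
Proof.
move=> h0; elim=> [|k IH] /=; first by rewrite sN0.
move: IH; case: (newt E0 H0 k) => E H /= IH.
set s := sN k; rewrite sNS -/s.
set E' := E - _.
have -> : E' * E' - E' = (E * E - E) - (4%:R * (E * E - E) + 1) * s * H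
                         + (4%:R * (E * E - E) + 1) * s * s * H * H by rewrite /E'; ring.
rewrite IH; ring.
Qed.

Lemma newt_cong E0 H0 k : pcg (2 ^ k) (newt E0 H0 k.+1).1 (newt E0 H0 k).1.
Proof.
rewrite /=; case: (newt E0 H0 k) => E H /=.
by exists (- ((2%:R * E - 1) * H)); rewrite /sN; ring.
Qed.

Lemma newt_cong1 E0 H0 k : pcg 1 (newt E0 H0 k).1 E0.
Proof.
elim: k => [|k IH]; first exact: pcg_refl.
apply: pcg_trans IH; apply: (@pcg_le _ 1 (2 ^ k)); first by rewrite expn_gt0.
exact: newt_cong.
Qed.

Lemma newt_congk E0 H0 k : pcg k (newt E0 H0 k.+1).1 (newt E0 H0 k).1.
Proof. by apply: (@pcg_le _ k (2 ^ k)); [apply: ltnW; apply: ltn_expl | apply: newt_cong]. Qed.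
End Newton.

Lemma newt_rmorph (R S : comNzRingType) (f : {rmorphism R -> S}) E0 H0 k :
  (f (newt E0 H0 k).1, f (newt E0 H0 k).2) = newt (f E0) (f H0) k.
Proof.
elim: k => [|k IH] //=.
move: IH; case: (newt E0 H0 k) => E H /= <-.
by rewrite /sN !(rmorphB, rmorphD, rmorphM, rmorph_nat, rmorph1).
Qed.

Definition E0g (R : comNzRingType) (Y D : R) := 1 - (Y - D) ^+ p.-1.
Definition H0g (R : comNzRingType) (Y Z D C1 : R) := - ((Y - D) ^+ p.-2 * (Z + C1 - Sb Y (- D))).

Lemma E0g_rmorph (R S : comNzRingType) (f : {rmorphism R -> S}) Y D :
  f (E0g Y D) = E0g (f Y) (f D).
Proof. by rewrite /E0g rmorphB rmorph1 rmorphXn rmorphB. Qed.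
Lemma H0g_rmorph (R S : comNzRingType) (f : {rmorphism R -> S}) Y Z D C1 :
  f (H0g Y Z D C1) = H0g (f Y) (f Z) (f D) (f C1).
Proof. by rewrite /H0g rmorphN rmorphM rmorphXn !rmorphB rmorphD Sb_rmorph rmorphN. Qed.

Lemma base_rel (y d : ZP) :
  let E := E0g y d in E * E - E = p%:R * H0g y (delta y) d (delta (- d)).
Proof.
rewrite /E0g /H0g.
have -> : delta y + delta (- d) - Sb y (- d) = delta (y - d) by rewrite delta_add.
set w := y - d.
have hw := deltaE' w.
have pE : p = (p.-2).+2 by have := prime_gt1 hp; lia.
have hwp : w ^+ p = w ^+ (p.-2).+2 by rewrite -pE.
rewrite hwp in hw.
have -> : p.-1 = (p.-2).+1 by have := prime_gt1 hp; lia.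
rewrite mulrN mulrCA hw.
set q := p.-2; rewrite !exprS; ring.
Qed.

Lemma digit_val (y d : ZP) k :
  let t := (newt (E0g y d) (H0g y (delta y) d (delta (- d))) k).1 in
  (pcg 1 y d -> pcg (2 ^ k) t 1) /\ (~ pcg 1 y d -> pcg (2 ^ k) t 0).
Proof.
move=> t.
have rel : pcg (2 ^ k) (t * t) t.
  by exists (newt (E0g y d) (H0g y (delta y) d (delta (- d))) k).2; rewrite newt_rel //; apply: base_rel.
have t1 := newt_cong1 (E0g y d) (H0g y (delta y) d (delta (- d))) k; rewrite -/t in t1.
split=> h.
  apply: idem1 rel _; apply: pcg_trans t1 _.
  have := pcgB (pcg_refl 1 1) (fermat_zero (proj1 (pcg_sub0 _ _ _) h)).
  by rewrite subr0.
apply: idem0 rel _; apply: pcg_trans t1 _.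
have h' : ~ pcg 1 (y - d) 0 by move=> h'; apply: h; apply/pcg_sub0.
have := pcgB (pcg_refl 1 1) (fermat_unit h').
by rewrite subrr.
Qed.

Variable m : nat.
Notation PR := {mpoly ZP[m.+1]}.
Definition xs (a : ZP) : 'I_m.+1 -> ZP := fun i => iter i (@delta p) a.
Notation ev a := (meval (xs a)).

Lemma evX a i : (i <= m)%N -> ev a 'X_(inord i) = iter i (@delta p) a.
Proof. by move=> hi; rewrite mevalXU /xs inordK. Qed.
Lemma evC a c : ev a c%:MP = c.
Proof. by rewrite mevalC. Qed.

Lemma ev_newt a E0 H0 k : ev a (newt E0 H0 k).1 = (newt (ev a E0) (ev a H0) k).1.
Proof. exact: (congr1 fst (newt_rmorph (meval (xs a)) E0 H0 k)). Qed.
Lemma ev_E0g a Y D : ev a (E0g Y D) = E0g (ev a Y) (ev a D).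
Proof. exact: (E0g_rmorph (meval (xs a))). Qed.
Lemma ev_H0g a Y Z D C1 : ev a (H0g Y Z D C1) = H0g (ev a Y) (ev a Z) (ev a D) (ev a C1).
Proof. exact: (H0g_rmorph (meval (xs a))). Qed.
Lemma ev_V a (c : ZP) g (w : PR) : ev a (V c%:MP g w) = V c g (ev a w).
Proof. by rewrite -{2}(evC a c); exact: (V_rmorph (meval (xs a))). Qed.
Lemma evM a (x y : PR) : ev a (x * y) = ev a x * ev a y.
Proof. exact: (rmorphM (meval (xs a))). Qed.
Lemma evXn a (x : PR) k : ev a (x ^+ k) = ev a x ^+ k.
Proof. exact: (rmorphXn (meval (xs a))). Qed.
Lemma evprod a (I : Type) (r : seq I) (P : pred I) (F : I -> PR) :
  ev a (\prod_(i <- r | P i) F i) = \prod_(i <- r | P i) ev a (F i).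
Proof. exact: (rmorph_prod (meval (xs a))). Qed.
Lemma evsum a (I : Type) (r : seq I) (P : pred I) (F : I -> PR) :
  ev a (\sum_(i <- r | P i) F i) = \sum_(i <- r | P i) ev a (F i).
Proof. exact: (rmorph_sum (meval (xs a))). Qed.
Lemma evnat a k : ev a (k%:R) = k%:R.
Proof. exact: (rmorph_nat (meval (xs a))). Qed.

Definition Edig (i : nat) (d : ZP) k : PR :=
  (newt (E0g 'X_(inord i) d%:MP) (H0g 'X_(inord i) 'X_(inord i.+1) d%:MP (delta (- d))%:MP) k).1.

Lemma ev_Edig a i d k : (i < m)%N ->
  ev a (Edig i d k) = (newt (E0g (iter i (@delta p) a) d)
     (H0g (iter i (@delta p) a) (delta (iter i (@delta p) a)) d (delta (- d))) k).1.
Proof.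
move=> hi; rewrite /Edig ev_newt ev_E0g ev_H0g !evX ?evC //; last exact: ltnW.
Qed.

Definition Ind (r : ZP) k : PR := \prod_(i < m) Edig i (iter i (@delta p) r) k.

Lemma Ind_cong r k : pcg k (Ind r k.+1) (Ind r k).
Proof. by apply: pcg_prod => i _; apply: newt_congk. Qed.

Lemma pcg_prod0 N (I : finType) (F : I -> ZP) (i0 : I) :
  pcg N (F i0) 0 -> pcg N (\prod_i F i) 0.
Proof.
move=> h; rewrite (bigD1 i0) //=.
by have := pcgM h (pcg_refl N (\prod_(j | j != i0) F j)); rewrite mul0r.
Qed.

Lemma pcg_prod1 N (I : finType) (F : I -> ZP) :
  (forall i, pcg N (F i) 1) -> pcg N (\prod_i F i) 1.
Proof.
move=> h; have := @pcg_prod _ N I (index_enum I) xpredT F (fun=> 1) (fun i _ => h i).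
by rewrite big1_eq.
Qed.

Lemma Ind_val a r k :
  (pcg m a r -> pcg (2 ^ k) (ev a (Ind r k)) 1) /\
  (~ pcg m a r -> pcg (2 ^ k) (ev a (Ind r k)) 0).
Proof.
rewrite /Ind evprod; split.
  move=> /ball_iff h.
  apply: pcg_prod1 => i; rewrite ev_Edig //.
  exact: (proj1 (digit_val _ _ k) (h i (ltn_ord i))).
move=> nh.
have [i hi] : exists i : 'I_m, ~ pcg 1 (iter i (@delta p) a) (iter i (@delta p) r).
  apply/existsNP => hall; apply: nh; apply/ball_iff => i hi.
  exact: (hall (Ordinal hi)).
apply: (pcg_prod0 (i0:=i)); rewrite ev_Edig //.
exact: (proj2 (digit_val _ _ k) hi).
Qed.



Definition Wb (r : ZP) : PR := 'X_(inord m) - (iter m (@delta p) r)%:MP.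

Fixpoint W (r : ZP) (k : nat) : nat -> PR :=
  match k with
  | 0 => fun d => if d is 0 then Wb r else 0
  | k'.+1 => fix Wd d := match d with
             | 0 => Wb r
             | d'.+1 => Wd d' + p%:R * V (iter (m - d'.+1) (@delta p) r)%:MP d'.+1 (W r k' d'.+1)
             end
  end.

Lemma W0 r k : W r k 0 = Wb r. Proof. by case: k. Qed.
Lemma WS r k d : W r k.+1 d.+1 = W r k.+1 d + p%:R * V (iter (m - d.+1) (@delta p) r)%:MP d.+1 (W r k d.+1).
Proof. by []. Qed.

Lemma W_cong r k d : pcg k (W r k.+1 d) (W r k d).
Proof.
elim: k d => [|k IH] d; first exact: pcg0.
elim: d => [|d IHd]; first by rewrite !W0; apply: pcg_refl.
change (pcg k.+1 (W r k.+2 d + p%:R * V (iter (m - d.+1) (@delta p) r)%:MP d.+1 (W r k.+1 d.+1))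
  (W r k.+1 d + p%:R * V (iter (m - d.+1) (@delta p) r)%:MP d.+1 (W r k d.+1))).
apply: pcgD => //.
by apply: pcg_mulp; apply: V_pcg; apply: IH.
Qed.

Fixpoint useq (r u0 : ZP) t : ZP :=
  if t is t'.+1 then useq r u0 t' - p%:R * V (iter t' (@delta p) r) (m - t') (useq r u0 t')
  else u0.

Lemma useq_eq a r u0 : a = r + (p ^ m)%:R * u0 -> forall t, (t <= m)%N ->
  iter t (@delta p) a = iter t (@delta p) r + (p ^ (m - t))%:R * useq r u0 t.
Proof.
move=> ha; elim=> [|t IH] ht; first by rewrite subn0.
rewrite !iterS IH ?(ltnW ht) //.
have e : (m - t = (m - t.+1).+1)%N by rewrite subnSK.
by rewrite e ball_delta -e.
Qed.

Lemma W_val a r u0 : a = r + (p ^ m)%:R * u0 ->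
  forall k d, (d <= m)%N -> pcg k (ev a (W r k d)) (useq r u0 (m - d)).
Proof.
move=> ha; elim=> [|k IH] d hd; first exact: pcg0.
elim: d hd => [|d IHd] hd.
  rewrite W0 subn0 /Wb mevalB evX // evC.
  apply: pcg_eq; rewrite (useq_eq ha (leqnn m)) subnn expn0 mul1r; ring.
rewrite WS mevalD evM evnat ev_V.
have e : (m - d = (m - d.+1).+1)%N by rewrite subnSK.
have e2 : (m - (m - d.+1) = d.+1)%N by rewrite subKn.
have h1 := IHd (ltnW hd); rewrite e /= e2 in h1.
have h2 := IH d.+1 hd.
have := pcgD h1 (pcg_mulp (V_pcg (iter (m - d.+1) (@delta p) r) d.+1 h2)).
by rewrite subrK.
Qed.

Lemma zval_series (x : nat -> ZP) (u : ZP) M n :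
  zval (\sum_(j < M) x j * u ^+ j) n = ((\sum_(j < M) zval (x j) n * zval u n ^ j) %% p ^ n)%N.
Proof.
rewrite zvsum -[RHS]modn_summ; congr (_ %% _)%N.
by apply: eq_bigr => j _; rewrite zvM zvX modnMmr.
Qed.

Lemma sum_split (R : nzRingType) (F : nat -> R) a b : (a <= b)%N ->
  \sum_(j < b) F j = \sum_(j < a) F j + \sum_(a <= j < b) F j.
Proof. by move=> hab; rewrite -!(big_mkord xpredT F) (big_cat_nat (leq0n a) hab). Qed.

Lemma pcg_sum0 (R : comNzRingType) k (I : Type) (r : seq I) (P : pred I) (F : I -> R) :
  (forall i, P i -> pcg k (F i) 0) -> pcg k (\sum_(i <- r | P i) F i) 0.
Proof. by move=> h; have := pcg_sum r h; rewrite big1_eq. Qed.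

Lemma pcgC k (x : ZP) : pcg k x 0 -> pcg k (x%:MP : PR) 0.
Proof. by move=> h; have := pcg_rmorph (mpolyC m.+1 (R:=ZP)) h; rewrite rmorph0. Qed.

Section Asm.
Variable f : ZP -> ZP.
Variable c : nat -> nat -> ZP.
Variable Nf : nat -> nat -> nat.
Hypothesis hN : forall r n j, (Nf r n <= j)%N -> zval (c r j) n = 0%N.
Hypothesis hev : forall r u, eval1 (c r) u (f (r%:R + (p ^ m)%:R * u)).

Definition J n := (\sum_(k < n.+1) \sum_(r < p ^ m) Nf r k)%N.
Lemma J_ge r n : (r < p ^ m)%N -> (Nf r n <= J n)%N.
Proof.
move=> hr; rewrite /J (bigD1 (Ordinal (ltnSn n))) //= (bigD1 (Ordinal hr)) //=.
by rewrite -addnA leq_addr.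
Qed.
Lemma J_mono n : (J n <= J n.+1)%N.
Proof. by rewrite /J [X in (_ <= X)%N]big_ord_recr /= leq_addr. Qed.

Definition ctr (r : nat) : ZP := r%:R.
Definition inner r n : PR := \sum_(j < J n) (c r j)%:MP * (W (ctr r) n m) ^+ j.
Definition P n : PR := \sum_(r < p ^ m) Ind (ctr r) n * inner r n.

Lemma P_cong n : pcg n (P n.+1) (P n).
Proof.
apply: pcg_sum => r _; apply: pcgM; first exact: Ind_cong.
rewrite /inner (sum_split (fun j => (c r j)%:MP * W (ctr r) n.+1 m ^+ j) (J_mono n)) -[X in pcg _ _ X]addr0; apply: pcgD.
  apply: pcg_sum => j _; apply: pcgM; first exact: pcg_refl.
  by apply: pcgX; apply: W_cong.
rewrite big_nat_cond; apply: pcg_sum0 => j /andP [/andP [hj _] _].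
have h0 : pcg n (c r j) 0.
  apply/pcg_zval; rewrite zvZ; apply: hN.
  by apply: leq_trans hj; apply: J_ge.
by have := pcgM (pcgC h0) (pcg_refl n (W (ctr r) n.+1 m ^+ j)); rewrite mul0r.
Qed.

Lemma P_val a n : pcg n (ev a (P n)) (f a).
Proof.
set r0 := zval a m.
have hr0 : (r0 < p ^ m)%N by apply: zbound.
have ha : pcg m a (ctr r0) by apply/pcg_zval; rewrite /ctr zvnat zmod.
have [u0 eu0] := ha.
have ea : a = ctr r0 + (p ^ m)%:R * u0 by rewrite -eu0 addrC subrK.
have nl : (n <= 2 ^ n)%N by apply: ltnW; apply: ltn_expl.
rewrite /P evsum (bigD1 (Ordinal hr0)) //= -[f a]addr0; apply: pcgD; last first.
  apply: pcg_sum0 => r hr; rewrite evM.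
  have nr : ~ pcg m a (ctr r).
    move/pcg_zval; rewrite /ctr zvnat modn_small // => e.
    by move: hr; rewrite -val_eqE /= -e eqxx.
  have := pcg_le nl (proj2 (Ind_val a (ctr r) n) nr) => h.
  by have := pcgM h (pcg_refl n (ev a (inner r n))); rewrite mul0r.
rewrite evM.
have h1 := pcg_le nl (proj1 (Ind_val a (ctr r0) n) ha).
apply: pcg_trans (pcgM h1 (pcg_refl n (ev a (inner r0 n)))) _; rewrite mul1r.
rewrite /inner evsum.
have hW := W_val ea n (leqnn m); rewrite subnn /= in hW.
apply: (@pcg_trans _ _ _ (\sum_(j < J n) c r0 j * u0 ^+ j)).
  apply: pcg_sum => j _; rewrite evM evXn evC; apply: pcgM; first exact: pcg_refl.
  exact: pcgX.
have [N hN'] := hev r0 u0 n.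
set M := maxn N (J n).
have hM := hN' M (leq_maxl _ _).
rewrite -ea in hM.
have e1 : pcg n (f a) (\sum_(j < M) c r0 j * u0 ^+ j).
  by apply/pcg_zval; rewrite zval_series.
apply: pcg_sym; apply: pcg_trans e1 _.
rewrite (sum_split (fun j => c r0 j * u0 ^+ j) (leq_maxr N (J n))) -[X in pcg _ _ X]addr0.
apply: pcgD; first exact: pcg_refl.
rewrite big_nat_cond; apply: pcg_sum0 => j /andP [/andP [hj _] _].
have h0 : pcg n (c r0 j) 0.
  apply/pcg_zval; rewrite zvZ; apply: hN.
  by apply: leq_trans hj; apply: J_ge.
by have := pcgM h0 (pcg_refl n (u0 ^+ j)); rewrite mul0r.
Qed.
End Asm.

Lemma modn_prodm (I : Type) (r : seq I) (P : pred I) (F : I -> nat) d :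
  ((\prod_(i <- r | P i) (F i %% d)) %% d = (\prod_(i <- r | P i) F i) %% d)%N.
Proof.
elim/big_rec2: _ => // i x y _ IH.
by rewrite -modnMm IH modnMm modnMml.
Qed.

Lemma zval_poly a (Q : PR) n M : (msize Q <= M.+1)%N ->
  zval (ev a Q) n = ((\sum_(mu : 'X_{1..m.+1 < M.+1}) zval (Q@_mu) n *
        \prod_(i < m.+1) zval (xs a i) n ^ (mu i)) %% p ^ n)%N.
Proof.
move=> hQ; rewrite /meval (mmapE (M.+1)) // zvsum -[RHS]modn_summ; congr (_ %% _)%N.
apply: eq_bigr => mu _; rewrite zvM zvprod /= -modnMmr -modn_prodm.
rewrite modn_mod modn_prodm.
under eq_bigr => i _ do rewrite zvX.
by rewrite modn_prodm modnMmr.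
Qed.

Definition mn (al : {ffun 'I_m.+1 -> nat}) : 'X_{1..m.+1} := [multinom al i | i < m.+1].

Lemma mdeg_mn al : mpoly.mdeg (mn al) = Defs.mdeg al.
Proof. by rewrite mdegE /Defs.mdeg; apply: eq_bigr => i _; rewrite mnmE. Qed.

Lemma reidx M (G : 'X_{1..m.+1} -> nat) :
  (\sum_(mu : 'X_{1..m.+1 < M.+1}) G mu =
   \sum_(al : {ffun 'I_m.+1 -> 'I_M.+1} | (\sum_(i < m.+1) (al i : nat) <= M)%N)
      G (mn [ffun i => nat_of_ord (al i)]))%N.
Proof.
pose h (mu : 'X_{1..m.+1 < M.+1}) : {ffun 'I_m.+1 -> 'I_M.+1} := [ffun i => inord (mu i)].
pose h' (al : {ffun 'I_m.+1 -> 'I_M.+1}) : 'X_{1..m.+1 < M.+1} :=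
  insubd bm0 (mn [ffun i => nat_of_ord (al i)]).
have mule (mu : 'X_{1..m.+1 < M.+1}) i : (mu i <= M)%N.
  have := bmdeg mu; rewrite mdegE (bigD1 i) //= ltnS => /(leq_trans _); apply.
  exact: leq_addr.
have hval mu i : nat_of_ord (h mu i) = mu i by rewrite /h ffunE inordK // ltnS mule.
have hsum mu : (\sum_(i < m.+1) (h mu i : nat))%N = mpoly.mdeg mu.
  by rewrite mdegE; apply: eq_bigr => i _; rewrite hval.
have hmn mu : mn [ffun i => nat_of_ord (h mu i)] = mu.
  by apply/mnmP => i; rewrite mnmE ffunE hval.
rewrite (reindex_onto h h').
  apply: esym; apply: eq_big => mu.
    apply/andP; split; first by rewrite hsum -ltnS bmdeg.
    have hd : (mpoly.mdeg (mn [ffun i => nat_of_ord (h mu i)]) < M.+1)%N by rewrite hmn bmdeg.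
    by apply/eqP; apply: val_inj; rewrite /h' (insubdK bm0 hd) hmn.
  by move=> _; rewrite hmn.
move=> al hal; apply/ffunP => i; rewrite /h /h' ffunE insubdK.
  by rewrite mnmE ffunE inord_val.
rewrite unfold_in /= mdeg_mn /Defs.mdeg ltnS; move: hal; apply: leq_trans.
by rewrite leq_eqVlt; apply/orP; left; apply/eqP; apply: eq_bigr => j _; rewrite ffunE.
Qed.

Section Final.
Variable f : ZP -> ZP.
Variable Q : nat -> PR.
Hypothesis Qc : forall n, pcg n (Q n.+1) (Q n).
Hypothesis Qv : forall a n, pcg n (ev a (Q n)) (f a).

Lemma coef_coh (mu : 'X_{1..m.+1}) n :
  (zval ((Q n.+1)@_mu) n.+1 = zval ((Q n)@_mu) n %[mod p ^ n])%N.
Proof.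
rewrite zcompat zmod; apply/pcg_zval.
have [D eD] := Qc n; exists (D@_mu).
by rewrite -mcoeffB eD !mulr_natl mcoeffMn.
Qed.

Definition Fco (al : {ffun 'I_m.+1 -> nat}) : ZP :=
  @mk p pgt0 (fun n => zval ((Q n)@_(mn al)) n) (fun n => coef_coh (mn al) n).

Lemma zvFco al n : zval (Fco al) n = zval ((Q n)@_(mn al)) n.
Proof. by rewrite /= zmod. Qed.

Lemma final : arith_diff_op m f.
Proof.
exists Fco; split.
  move=> n; exists (msize (Q n)) => al hal.
  rewrite zvFco memN_msupp_eq0 ?zvZ //.
  by apply: msize_mdeg_ge; rewrite mdeg_mn.
move=> a n; exists (msize (Q n)) => M hM.
have e := proj1 (pcg_zval _ _ _) (pcg_sym (Qv a n)); rewrite e.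
rewrite (@zval_poly a (Q n) n M); last exact: leq_trans hM (leqnSn M).
rewrite (reidx M (fun mu => zval (Q n)@_mu n * \prod_(i < m.+1) zval (xs a i) n ^ mu i)%N).
congr (_ %% _)%N; apply: eq_bigr => al _.
rewrite zvFco; congr (_ * _)%N.
by apply: eq_bigr => i _; rewrite mnmE ffunE.
Qed.
End Final.

Lemma main (f : ZP -> ZP) : analytic_level m f -> arith_diff_op m f.
Proof.
move=> hf.
have [c hc] := choice (fun r : nat => hf (r%:R)).
have hN1 : forall r, exists Nr : nat -> nat, forall n j, (Nr n <= j)%N -> zval (c r j) n = 0%N.
  move=> r; have [Nr hNr] := choice (proj1 (hc r)); by exists Nr.
have [Nf hN] := choice hN1.
have hev : forall r u, eval1 (c r) u (f (r%:R + (p ^ m)%:R * u)).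
  by move=> r u; have := proj2 (hc r) u; rewrite zofnatE.
apply: (@final f (P c Nf)).
  exact: P_cong.
by move=> a n; apply: P_val.
Qed.

End Main.

Theorem theorem1p5 (p : nat) (hp : prime p) (m : nat) (f : Zp p -> Zp p) :
  analytic_level m f -> arith_diff_op m f.
Proof. exact: (@main p hp m f). Qed.
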